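(* Let $1\le p<\infty$. Let $f:\mathbb R\to\mathbb R$ be Henstock–Kurzweil integrable on every compact interval and suppose (a) the Henstock–Kurzweil integral $\int_{-\infty}^\infty f(t)\,dt$ exists and equals $0$, and (b) the Henstock–Kurzweil integral $\int_{-\infty}^\infty |t|^\alpha f(t)\,dt$ exists for some $\alpha>1/p$. Then $F(x)=\int_{-\infty}^x f(t)\,dt$ belongs to $L^p(\mathbb R)$, and hence $f=F'\in L'^{\,p}$.
   Context: $L'^{\,p}=\{f\in\mathcal S' : f=F' \text{ (distributional derivative) for some } F\in L^p(\mathbb R)\}$. *)

(* Defs.v *)
From Stdlib Require Import Reals Lra List.
Open Scope R_scope.

Fixpoint tagged_div (a b : R) (P : list (R * R * R)) : Prop :=
  match P with
  | nil => a = b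
  | (u, v, t) :: P' => u = a /\ u < v /\ u <= t <= v /\ tagged_div v b P'
  end.

Definition delta_fine (delta : R -> R) (P : list (R * R * R)) : Prop :=
  Forall (fun x => match x with (u, v, t) =>
            t - delta t < u /\ v < t + delta t end) P.

Fixpoint riemann_sum (f : R -> R) (P : list (R * R * R)) : R :=
  match P with
  | nil => 0
  | (u, v, t) :: P' => f t * (v - u) + riemann_sum f P'
  end.

Definition HK_int (f : R -> R) (a b I : R) : Prop :=
  (a = b /\ I = 0) \/
  (a < b /\
   forall eps : R, 0 < eps ->
     exists delta : R -> R, (forall x, 0 < delta x) /\
       forall P, tagged_div a b P -> delta_fine delta P ->
         Rabs (riemann_sum f P - I) < eps).

Definition HK_loc (f : R -> R) : Prop :=
  forall a b, a <= b -> exists I, HK_int f a b I.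

(* HK integral over the whole line (via Hake's theorem: limit of the
   integrals over [a,b] as a -> -oo, b -> +oo). *)
Definition HK_int_R (f : R -> R) (I : R) : Prop :=
  HK_loc f /\
  forall eps : R, 0 < eps -> exists M : R,
    forall a b J, a < - M -> M < b -> HK_int f a b J -> Rabs (J - I) < eps.

Definition HK_int_left (f : R -> R) (x I : R) : Prop :=
  HK_loc f /\
  forall eps : R, 0 < eps -> exists M : R,
    forall a J, a < - M -> a <= x -> HK_int f a x J -> Rabs (J - I) < eps.

(* |t|^alpha for alpha > 0, with the convention 0^alpha = 0
   (Stdlib's Rpower 0 alpha is 1). *)
Definition abspow (t alpha : R) : R :=
  if Req_EM_T t 0 then 0 else Rpower (Rabs t) alpha.

(* F in L^p(R): |F|^p has finite integral over R.  For nonnegative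
   functions HK integrability coincides with Lebesgue integrability
   (and implies measurability). *)
Definition in_Lp (p : R) (F : R -> R) : Prop :=
  exists I : R, HK_int_R (fun x => abspow (F x) p) I.

(* Main.v *)
Require Import Defs.
From Stdlib Require Import Reals Lra Lia List ClassicalEpsilon.
Open Scope R_scope.

Lemma le_epsK x y K : 0 <= K -> (forall e, 0 < e -> x <= y + K * e) -> x <= y.
Proof.
  intros HK H. destruct (Rle_dec x y) as [|Hn]; auto.
  assert (Hxy : 0 < x - y) by lra.
  set (e := (x - y) / (2 * (K + 1))).
  assert (He : 0 < e) by (unfold e; apply Rdiv_lt_0_compat; lra).
  specialize (H e He).
  assert (K * e < x - y).
  { assert (K * e <= (K+1) * e) by nra.
    assert ((K+1) * e = (x - y) / 2) by (unfold e; field; lra). lra. }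
  lra.
Qed.

Lemma td_le a b P : tagged_div a b P -> a <= b.
Proof.
  revert a; induction P as [|[[u v] t] P IH]; simpl; intros a H.
  - lra.
  - destruct H as (-> & Huv & Ht & H). apply IH in H. lra.
Qed.

Lemma td_app a b c P Q : tagged_div a b P -> tagged_div b c Q -> tagged_div a c (P++Q).
Proof.
  revert a; induction P as [|[[u v] t] P IH]; simpl; intros a H HQ.
  - subst; auto.
  - destruct H as (-> & Huv & Ht & H). repeat split; auto; lra.
Qed.

Lemma rs_app f P Q : riemann_sum f (P ++ Q) = riemann_sum f P + riemann_sum f Q.
Proof.
  induction P as [|[[u v] t] P IH]; simpl; [lra|]. rewrite IH; lra.
Qed.

Lemma fine_app d P Q : delta_fine d P -> delta_fine d Q -> delta_fine d (P ++ Q).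
Proof. intros; apply Forall_app; auto. Qed.

Lemma fine_mono d d' P : (forall x, d x <= d' x) -> delta_fine d P -> delta_fine d' P.
Proof.
  intros Hd H. unfold delta_fine in *. eapply Forall_impl; [|exact H].
  intros [[u v] t] [H1 H2]. specialize (Hd t). lra.
Qed.

Lemma fine_min1 d1 d2 P : delta_fine (fun x => Rmin (d1 x) (d2 x)) P -> delta_fine d1 P.
Proof. apply fine_mono. intros; apply Rmin_l. Qed.
Lemma fine_min2 d1 d2 P : delta_fine (fun x => Rmin (d1 x) (d2 x)) P -> delta_fine d2 P.
Proof. apply fine_mono. intros; apply Rmin_r. Qed.

Lemma rs_ext f g a b P : (forall t, a <= t <= b -> f t = g t) -> tagged_div a b P ->
  riemann_sum f P = riemann_sum g P.
Proof.
  revert a; induction P as [|[[u v] t] P IH]; simpl; intros a Hfg H; auto.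
  destruct H as (-> & Huv & Ht & H). pose proof (td_le _ _ _ H).
  rewrite (IH v); auto.
  - rewrite Hfg; auto; lra.
  - intros; apply Hfg; lra.
Qed.

Lemma rs_le f g a b P : (forall t, a <= t <= b -> f t <= g t) -> tagged_div a b P ->
  riemann_sum f P <= riemann_sum g P.
Proof.
  revert a; induction P as [|[[u v] t] P IH]; simpl; intros a Hfg H; [lra|].
  destruct H as (-> & Huv & Ht & H). pose proof (td_le _ _ _ H).
  assert (riemann_sum f P <= riemann_sum g P) by (apply (IH v); auto; intros; apply Hfg; lra).
  assert (f t <= g t) by (apply Hfg; lra). nra.
Qed.

Lemma cousin d a b : (forall x, 0 < d x) -> a <= b ->
  exists P, tagged_div a b P /\ delta_fine d P.
Proof.
  intros Hd Hab.
  set (E := fun x => a <= x <= b /\ exists P, tagged_div a x P /\ delta_fine d P).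
  assert (HE : exists x, E x) by (exists a; split; [lra| exists nil; simpl; split; auto; constructor]).
  assert (HB : bound E) by (exists b; intros x [Hx _]; lra).
  destruct (completeness E HB HE) as [s [Hub Hlub]].
  assert (Has : a <= s) by (apply Hub; destruct HE as [x Hx]; unfold E; split; [lra|exists nil; simpl; split; auto; constructor]).
  assert (Hsb : s <= b) by (apply Hlub; intros x [Hx _]; lra).
  assert (Hs : E s).
  { assert (Hex : exists x, E x /\ s - d s < x).
    { apply Classical_Prop.NNPP; intro Hn.
      assert (s <= s - d s).
      { apply Hlub. intros x Hx. destruct (Rle_dec x (s - d s)) as [|Hc]; auto.
        exfalso; apply Hn; exists x; split; auto; lra. }
      specialize (Hd s); lra. }
    destruct Hex as [x [[Hx [P [HP HPf]]] Hxs]].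
    assert (x <= s) by (apply Hub; split; [lra| eauto]).
    destruct (Req_dec x s) as [->|Hne].
    - split; [lra| eauto].
    - split; [lra|]. exists (P ++ (x, s, s) :: nil). split.
      + apply td_app with x; auto. simpl. repeat split; lra.
      + apply fine_app; auto. constructor; [|constructor]. specialize (Hd s); lra. }
  destruct (Req_dec s b) as [<-|Hne]; [destruct Hs as [_ H]; exact H|].
  exfalso. destruct Hs as [_ [P [HP HPf]]].
  set (y := Rmin b (s + d s / 2)).
  assert (Hy1 : s < y) by (unfold y; specialize (Hd s); apply Rmin_glb_lt; lra).
  assert (Hy2 : y <= b) by apply Rmin_l.
  assert (Hy3 : y <= s + d s / 2) by apply Rmin_r.
  assert (y <= s).
  { apply Hub. split; [lra|]. exists (P ++ (s, y, s) :: nil). split.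
    + apply td_app with s; auto. simpl. repeat split; lra.
    + apply fine_app; auto. constructor; [|constructor]. specialize (Hd s); lra. }
  lra.
Qed.

Lemma abs_le0 x : Rabs x <= 0 -> x = 0.
Proof. unfold Rabs; destruct Rcase_abs; lra. Qed.

Definition gauge_prop f a b I d eps :=
  (forall x, 0 < d x) /\ forall P, tagged_div a b P -> delta_fine d P ->
    Rabs (riemann_sum f P - I) < eps.

Lemma td_nil a P : tagged_div a a P -> P = nil.
Proof.
  destruct P as [|[[u v] t] P]; simpl; auto. intros (-> & H1 & _ & H).
  apply td_le in H. lra.
Qed.

Lemma HK_le f a b I : HK_int f a b I -> a <= b.
Proof. intros [[]|[]]; lra. Qed.

Lemma HK_gauge f a b I : HK_int f a b I -> forall eps, 0 < eps ->
  exists d, gauge_prop f a b I d eps.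
Proof.
  intros [[-> ->]|[Hab H]] eps Heps.
  - exists (fun _ => 1). split; [intros; lra|]. intros P HP _.
    rewrite (td_nil _ _ HP). simpl. rewrite Rminus_0_r, Rabs_R0. lra.
  - destruct (H eps Heps) as [d [Hd H']]. exists d; split; auto.
Qed.

Lemma HK_of_gauge f a b I : a <= b -> (forall eps, 0 < eps -> exists d, gauge_prop f a b I d eps) ->
  HK_int f a b I.
Proof.
  intros Hab H. destruct (Rle_lt_or_eq_dec _ _ Hab) as [Hlt| <-].
  - right. split; [exact Hlt|]. intros eps Heps. destruct (H eps Heps) as [d [Hd Hp]]. exists d; split; auto.
  - left. split; auto.
    apply abs_le0.
    apply le_epsK with 1; [lra|]. intros e He.
    destruct (H e He) as [d [Hd H']]. specialize (H' nil eq_refl (Forall_nil _)).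
    simpl in H'. rewrite Rminus_0_l, Rabs_Ropp in H'. lra.
Qed.

Lemma HK_unique f a b I J : HK_int f a b I -> HK_int f a b J -> I = J.
Proof.
  intros HI HJ. pose proof (HK_le _ _ _ _ HI) as Hab.
  assert (Rabs (I - J) <= 0).
  { apply le_epsK with 2; [lra|]. intros e He.
    destruct (HK_gauge _ _ _ _ HI e He) as [d1 [Hd1 H1]].
    destruct (HK_gauge _ _ _ _ HJ e He) as [d2 [Hd2 H2]].
    destruct (cousin (fun x => Rmin (d1 x) (d2 x)) a b) as [P [HP HPf]]; auto.
    { intros; apply Rmin_glb_lt; auto. }
    specialize (H1 P HP (fine_min1 _ _ _ HPf)). specialize (H2 P HP (fine_min2 _ _ _ HPf)).
    revert H1 H2. unfold Rabs; repeat destruct Rcase_abs; lra. }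
  apply abs_le0 in H. lra.
Qed.

Definition Phi f a b := epsilon (inhabits 0) (fun I => HK_int f a b I).

Lemma Phi_spec f a b : HK_loc f -> a <= b -> HK_int f a b (Phi f a b).
Proof.
  intros Hf Hab. unfold Phi. apply epsilon_spec. apply Hf; auto.
Qed.

Lemma Phi_eq f a b I : HK_loc f -> HK_int f a b I -> Phi f a b = I.
Proof.
  intros Hf H. apply HK_unique with f a b; auto. apply Phi_spec; auto. eapply HK_le; eauto.
Qed.



Lemma Phi_refl f a : HK_loc f -> Phi f a a = 0.
Proof. intros Hf. apply Phi_eq; auto. left; auto. Qed.

Lemma Phi_add f a b c : HK_loc f -> a <= b -> b <= c -> Phi f a c = Phi f a b + Phi f b c.
Proof.
  intros Hf Hab Hbc.
  pose proof (Phi_spec f a b Hf Hab) as HI.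
  pose proof (Phi_spec f b c Hf Hbc) as HJ.
  pose proof (Phi_spec f a c Hf ltac:(lra)) as HK.
  set (I := Phi f a b) in *. set (J := Phi f b c) in *. set (K := Phi f a c) in *.
  assert (Rabs (K - (I + J)) <= 0).
  { apply le_epsK with 3; [lra|]. intros e He.
    destruct (HK_gauge _ _ _ _ HI e He) as [d1 [Hd1 H1]].
    destruct (HK_gauge _ _ _ _ HJ e He) as [d2 [Hd2 H2]].
    destruct (HK_gauge _ _ _ _ HK e He) as [d3 [Hd3 H3]].
    set (d := fun x => Rmin (d3 x) (Rmin (d1 x) (d2 x))).
    assert (Hd : forall x, 0 < d x) by (intros; unfold d; repeat apply Rmin_glb_lt; auto).
    destruct (cousin d a b) as [P [HP HPf]]; auto.
    destruct (cousin d b c) as [Q [HQ HQf]]; auto.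
    assert (HPQ := td_app _ _ _ _ _ HP HQ).
    assert (HPQf := fine_app _ _ _ HPf HQf).
    specialize (H3 _ HPQ (fine_min1 _ _ _ HPQf)).
    specialize (H1 _ HP (fine_min1 _ _ _ (fine_min2 _ _ _ HPf))).
    specialize (H2 _ HQ (fine_min2 _ _ _ (fine_min2 _ _ _ HQf))).
    rewrite rs_app in H3.
    revert H1 H2 H3. unfold Rabs; repeat destruct Rcase_abs; lra. }
  apply abs_le0 in H. lra.
Qed.

Lemma SH f c d u v dl eps : HK_loc f -> c <= u -> u <= v -> v <= d ->
  gauge_prop f c d (Phi f c d) dl eps ->
  forall P, tagged_div u v P -> delta_fine dl P -> Rabs (riemann_sum f P - Phi f u v) <= eps.
Proof.
  intros Hf Hcu Huv Hvd [Hdl Hg] P HP HPf.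
  apply le_epsK with 2; [lra|]. intros e He.
  destruct (HK_gauge _ _ _ _ (Phi_spec f c u Hf Hcu) e He) as [d1 [Hd1 H1]].
  destruct (HK_gauge _ _ _ _ (Phi_spec f v d Hf Hvd) e He) as [d2 [Hd2 H2]].
  destruct (cousin (fun x => Rmin (dl x) (d1 x)) c u) as [P1 [HP1 HP1f]]; auto.
  { intros; apply Rmin_glb_lt; auto. }
  destruct (cousin (fun x => Rmin (dl x) (d2 x)) v d) as [P2 [HP2 HP2f]]; auto.
  { intros; apply Rmin_glb_lt; auto. }
  specialize (H1 _ HP1 (fine_min2 _ _ _ HP1f)).
  specialize (H2 _ HP2 (fine_min2 _ _ _ HP2f)).
  specialize (Hg (P1 ++ P ++ P2)).
  assert (Hcd := Phi_add f c u d Hf Hcu ltac:(lra)).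
  assert (Hud := Phi_add f u v d Hf Huv Hvd).
  rewrite !rs_app in Hg.
  assert (Hg' : Rabs (riemann_sum f P1 + (riemann_sum f P + riemann_sum f P2) - Phi f c d) < eps).
  { apply Hg. apply td_app with u; auto. apply td_app with v; auto.
    apply fine_app; [exact (fine_min1 _ _ _ HP1f)|]. apply fine_app; auto.
    exact (fine_min1 _ _ _ HP2f). }
  clear Hg. revert H1 H2 Hg'. rewrite Hcd, Hud. unfold Rabs; repeat destruct Rcase_abs; lra.
Qed.

Lemma fine_cons_iff d x P : delta_fine d (x :: P) <-> 
  (match x with (u, v, t) => t - d t < u /\ v < t + d t end) /\ delta_fine d P.
Proof. unfold delta_fine. split; intro H; [inversion H; auto | constructor; tauto]. Qed.

Lemma abel (phi w g : R -> R) c d dl B : 0 <= B ->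
  (forall s t, c <= s -> s <= t -> t <= d -> Rabs (phi t - phi s) <= w t - w s) ->
  (forall s Q, c <= s -> tagged_div s d Q -> delta_fine dl Q -> Rabs (riemann_sum g Q) <= B) ->
  forall P' u v t, c <= u -> tagged_div u d ((u,v,t)::P') -> delta_fine dl ((u,v,t)::P') ->
  Rabs (riemann_sum (fun x => phi x * g x) ((u,v,t)::P') - phi t * riemann_sum g ((u,v,t)::P'))
    <= B * (w d - w t).
Proof.
  intros HB Hw Hg P'. induction P' as [|[[u2 v2] t2] P'' IH]; intros u v t Hcu HP HPf.
  - simpl in HP. destruct HP as (_ & Huv & Ht & ->).
    simpl. replace (phi t * g t * (d - u) + 0 - phi t * (g t * (d - u) + 0)) with 0 by ring.
    rewrite Rabs_R0. specialize (Hw t d ltac:(lra) ltac:(lra) ltac:(lra)).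
    pose proof (Rabs_pos (phi d - phi t)). nra.
  - assert (HP' := HP). simpl in HP'. destruct HP' as (_ & Huv & Ht & -> & Huv2 & Ht2 & HP'').
    apply fine_cons_iff in HPf. destruct HPf as [_ HPf'].
    assert (Hv2d := td_le _ _ _ HP'').
    assert (IH' := IH v v2 t2 ltac:(lra) ltac:(simpl; auto) HPf').
    assert (Hb := Hg v ((v, v2, t2) :: P'') ltac:(lra) ltac:(simpl; auto) HPf').
    assert (Hw' := Hw t t2 ltac:(lra) ltac:(lra) ltac:(lra)).
    set (S := riemann_sum g ((v, v2, t2) :: P'')) in *.
    set (T := riemann_sum (fun x => phi x * g x) ((v, v2, t2) :: P'')) in *.
    change (riemann_sum (fun x => phi x * g x) ((u, v, t) :: (v, v2, t2) :: P''))
      with (phi t * g t * (v - u) + T).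
    change (riemann_sum g ((u, v, t) :: (v, v2, t2) :: P'')) with (g t * (v - u) + S).
    replace (phi t * g t * (v - u) + T - phi t * (g t * (v - u) + S))
      with ((T - phi t2 * S) + (phi t2 - phi t) * S) by ring.
    eapply Rle_trans; [apply Rabs_triang|]. rewrite Rabs_mult.
    assert (Rabs (phi t2 - phi t) * Rabs S <= (w t2 - w t) * B).
    { apply Rmult_le_compat; auto using Rabs_pos. }
    nra.
Qed.

Lemma key f g phi w c d Phi0 M : HK_loc f -> HK_loc g -> c < d ->
  (forall t, c <= t <= d -> f t = phi t * g t) ->
  (forall s t, c <= s -> s <= t -> t <= d -> Rabs (phi t - phi s) <= w t - w s) ->
  (forall t, c <= t <= d -> 0 <= phi t <= Phi0) ->
  (forall t, c <= t <= d -> w d - w t <= Phi0) ->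
  (forall s, c <= s <= d -> Rabs (Phi g s d) <= M) ->
  Rabs (Phi f c d) <= 2 * Phi0 * M.
Proof.
  intros Hf Hg Hcd Hfg Hw Hphi HwP HM.
  assert (HP0 : 0 <= Phi0) by (destruct (Hphi c); lra).
  assert (HM0 : 0 <= M) by (eapply Rle_trans; [apply Rabs_pos| apply (HM c); lra]).
  apply le_epsK with (1 + 2 * Phi0); [lra|]. intros e He.
  destruct (HK_gauge _ _ _ _ (Phi_spec f c d Hf ltac:(lra)) e He) as [d1 [Hd1 H1]].
  destruct (HK_gauge _ _ _ _ (Phi_spec g c d Hg ltac:(lra)) e He) as [d2 [Hd2 H2]].
  set (dl := fun x => Rmin (d1 x) (d2 x)).
  destruct (cousin dl c d) as [P [HP HPf]]; [intros; apply Rmin_glb_lt; auto| lra|].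
  assert (H1P := H1 P HP (fine_min1 _ _ _ HPf)).
  assert (Htail : forall s Q, c <= s -> tagged_div s d Q -> delta_fine dl Q ->
            Rabs (riemann_sum g Q) <= M + e).
  { intros s Q Hs HQ HQf. assert (Hsd := td_le _ _ _ HQ).
    assert (HS := SH g c d s d d2 e Hg Hs Hsd ltac:(lra) ltac:(split; auto) Q HQ (fine_min2 _ _ _ HQf)).
    assert (HMs := HM s ltac:(lra)).
    revert HS HMs. unfold Rabs; repeat destruct Rcase_abs; lra. }
  destruct P as [|[[u v] t] P'].
  { simpl in HP. lra. }
  assert (HA := abel phi w g c d dl (M + e) ltac:(lra) Hw Htail P' u v t).
  assert (HP' := HP). simpl in HP'. destruct HP' as (-> & Huv & Ht & HP'').
  assert (Hvd := td_le _ _ _ HP'').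
  specialize (HA ltac:(lra) HP HPf).
  rewrite (rs_ext f (fun x => phi x * g x) c d) in H1P; auto.
  assert (Hg1 := Htail c _ ltac:(lra) HP HPf).
  assert (Hpt := Hphi t ltac:(lra)). assert (Hwt := HwP t ltac:(lra)).
  set (S := riemann_sum g ((c, v, t) :: P')) in *.
  set (T := riemann_sum (fun x => phi x * g x) ((c, v, t) :: P')) in *.
  assert (Rabs (phi t * S) <= Phi0 * (M + e)).
  { rewrite Rabs_mult. rewrite (Rabs_right (phi t)) by lra. pose proof (Rabs_pos S). apply Rmult_le_compat; lra. }
  assert ((M + e) * (w d - w t) <= (M+e) * Phi0) by (apply Rmult_le_compat_l; lra).
  assert (Hsplit : Phi f c d = (Phi f c d - T) + (T - phi t * S) + phi t * S) by ring.
  rewrite Hsplit. eapply Rle_trans; [apply Rabs_triang|].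
  eapply Rle_trans; [apply Rplus_le_compat_r; apply Rabs_triang|].
  rewrite Rabs_minus_sym in H1P.
  assert (Heq : 2 * Phi0 * M + (1 + 2 * Phi0) * e = e + (M + e) * Phi0 + Phi0 * (M + e)) by ring.
  rewrite Heq. lra.
Qed.

Lemma Rpower_pos x y : 0 < Rpower x y.
Proof. unfold Rpower. apply exp_pos. Qed.

Lemma rpow_neg_anti a s t : 0 <= a -> 0 < s <= t -> Rpower t (-a) <= Rpower s (-a).
Proof.
  intros Ha Hst. rewrite !Rpower_Ropp. apply Rinv_le_contravar; [apply Rpower_pos|].
  apply Rle_Rpower_l; auto.
Qed.

Lemma abspow_pos t a : 0 < t -> abspow t a = Rpower t a.
Proof.
  intros Ht. unfold abspow. destruct Req_EM_T; [lra|]. rewrite Rabs_right; lra.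
Qed.

Lemma abspow_neg t a : t < 0 -> abspow t a = Rpower (-t) a.
Proof.
  intros Ht. unfold abspow. destruct Req_EM_T; [lra|]. rewrite Rabs_left; lra.
Qed.

Lemma rpow_inv_mul t a : 0 < t -> Rpower t (-a) * Rpower t a = 1.
Proof. intros Ht. rewrite <- Rpower_plus. replace (-a + a) with 0 by ring. apply Rpower_O; auto. Qed.

Lemma cauchy_R g I : HK_int_R g I -> forall eps, 0 < eps -> exists M,
  (forall s t, M < s -> s <= t -> Rabs (Phi g s t) < 2 * eps) /\
  (forall s t, s <= t -> t < - M -> Rabs (Phi g s t) < 2 * eps).
Proof.
  intros [Hg H] eps Heps. destruct (H eps Heps) as [M HM]. exists M. split.
  - intros s t Hs Hst. set (a := - Rabs M - Rabs s - 1).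
    assert (Ha1 : a < - M) by (unfold a; pose proof (Rle_abs M); pose proof (Rabs_pos s); lra).
    assert (Ha2 : a <= s) by (unfold a; pose proof (Rle_abs (-s)); rewrite Rabs_Ropp in *; pose proof (Rabs_pos M); lra).
    assert (H1 := HM a t (Phi g a t) Ha1 ltac:(lra) (Phi_spec g a t Hg ltac:(lra))).
    assert (H2 := HM a s (Phi g a s) Ha1 ltac:(lra) (Phi_spec g a s Hg ltac:(lra))).
    rewrite (Phi_add g a s t Hg Ha2 Hst) in H1.
    revert H1 H2. unfold Rabs at 1 2 3; repeat destruct Rcase_abs; lra.
  - intros s t Hst Ht. set (b := Rabs M + Rabs t + 1).
    assert (Hb1 : M < b) by (unfold b; pose proof (Rle_abs M); pose proof (Rabs_pos t); lra).
    assert (Hb2 : t <= b) by (unfold b; pose proof (Rle_abs t); pose proof (Rabs_pos M); lra).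
    assert (H1 := HM s b (Phi g s b) ltac:(lra) Hb1 (Phi_spec g s b Hg ltac:(lra))).
    assert (H2 := HM t b (Phi g t b) ltac:(lra) Hb1 (Phi_spec g t b Hg ltac:(lra))).
    rewrite (Phi_add g s t b Hg Hst Hb2) in H1.
    revert H1 H2. unfold Rabs at 1 2 3; repeat destruct Rcase_abs; lra.
Qed.

Section Decay.
Variables (f : R -> R) (alpha Ig : R).
Hypothesis hloc : HK_loc f.
Hypothesis halpha : 0 < alpha.
Hypothesis hg : HK_int_R (fun t => abspow t alpha * f t) Ig.

Let g := fun t => abspow t alpha * f t.

Lemma decay_Phi : exists N, 1 <= N /\
  (forall x b, N <= x -> x <= b -> Rabs (Phi f x b) <= 4 * Rpower x (-alpha)) /\
  (forall a x, x <= - N -> a <= x -> Rabs (Phi f a x) <= 4 * Rpower (-x) (-alpha)).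
Proof.
  assert (Hgl : HK_loc g) by (destruct hg; auto).
  destruct (cauchy_R g Ig hg 1 ltac:(lra)) as [M1 [HR HL]].
  exists (Rmax 1 (M1 + 1)). split; [apply Rmax_l|].
  assert (HN1 := Rmax_l 1 (M1+1)). assert (HN2 := Rmax_r 1 (M1+1)).
  set (N := Rmax 1 (M1 + 1)) in *.
  split.
  - intros x b Hx Hxb. destruct (Req_dec x b) as [<-|Hne].
    { rewrite Phi_refl, Rabs_R0; auto. pose proof (Rpower_pos x (-alpha)); lra. }
    replace (4 * Rpower x (-alpha)) with (2 * Rpower x (-alpha) * 2) by ring.
    apply key with g (fun t => Rpower t (-alpha)) (fun t => - Rpower t (-alpha)); auto; try lra.
    + intros t Ht. unfold g. rewrite abspow_pos by lra.
      rewrite <- Rmult_assoc, rpow_inv_mul by lra. ring.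
    + intros s t Hs Hst Htb. assert (H := rpow_neg_anti alpha s t ltac:(lra) ltac:(lra)).
      rewrite Rabs_left1; lra.
    + intros t Ht. split; [pose proof (Rpower_pos t (-alpha)); lra|].
      apply rpow_neg_anti; lra.
    + intros t Ht. assert (H := rpow_neg_anti alpha x t ltac:(lra) ltac:(lra)).
      pose proof (Rpower_pos b (-alpha)). lra.
    + intros s Hs. left. replace 2 with (2*1) by ring. apply (HR s b); lra.
  - intros a x Hx Hax. destruct (Req_dec a x) as [<-|Hne].
    { rewrite Phi_refl, Rabs_R0; auto. pose proof (Rpower_pos (-a) (-alpha)); lra. }
    replace (4 * Rpower (-x) (-alpha)) with (2 * Rpower (-x) (-alpha) * 2) by ring.
    apply key with g (fun t => Rpower (-t) (-alpha)) (fun t => Rpower (-t) (-alpha)); auto; try lra.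
    + intros t Ht. unfold g. rewrite abspow_neg by lra.
      rewrite <- Rmult_assoc, rpow_inv_mul by lra. ring.
    + intros s t Hs Hst Htb. assert (H := rpow_neg_anti alpha (-t) (-s) ltac:(lra) ltac:(lra)).
      rewrite Rabs_right; lra.
    + intros t Ht. split; [pose proof (Rpower_pos (-t) (-alpha)); lra|].
      apply rpow_neg_anti; lra.
    + intros t Ht. pose proof (Rpower_pos (-t) (-alpha)). lra.
    + intros s Hs. left. replace 2 with (2*1) by ring. apply (HL s x); lra.
Qed.

End Decay.

Lemma nat_big y : exists n : nat, y < INR n.
Proof. destruct (INR_unbounded y) as [n Hn]. exists n; lra. Qed.

Lemma Phi_diff_small f x B e a1 a2 : HK_loc f ->
  (forall s t, s <= t -> t < B -> Rabs (Phi f s t) < e) ->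
  a1 < B -> a2 < B -> a1 <= x -> a2 <= x -> Rabs (Phi f a1 x - Phi f a2 x) < e.
Proof.
  intros Hf H H1 H2 H3 H4. destruct (Rle_dec a1 a2) as [Hle|Hlt].
  - rewrite (Phi_add f a1 a2 x Hf Hle H4). replace (Phi f a1 a2 + Phi f a2 x - Phi f a2 x) with (Phi f a1 a2) by ring.
    apply H; lra.
  - rewrite (Phi_add f a2 a1 x Hf ltac:(lra) H3). replace (Phi f a1 x - (Phi f a2 a1 + Phi f a1 x)) with (- Phi f a2 a1) by ring.
    rewrite Rabs_Ropp. apply H; lra.
Qed.

Section Left.
Variables (f : R -> R) (I0 : R).
Hypothesis hloc : HK_loc f.
Hypothesis ha : HK_int_R f I0.

Lemma left_exists x : exists I, HK_int_left f x I.
Proof.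
  set (u := fun n : nat => Phi f (x - INR n) x).
  assert (Hc : Cauchy_crit u).
  { intros e He. destruct (cauchy_R f I0 ha (e/2) ltac:(lra)) as [M [_ HL]].
    destruct (nat_big (x + Rabs M)) as [N HN]. exists N. intros n m Hn Hm.
    unfold R_dist, u. apply le_INR in Hn. apply le_INR in Hm. pose proof (Rle_abs M).
    replace e with (2 * (e / 2)) by field.
    apply Phi_diff_small with (-M); auto; try lra.
    pose proof (pos_INR n); lra. pose proof (pos_INR m); lra. }
  destruct (Rcomplete.R_complete u Hc) as [l Hl]. exists l. split; auto.
  intros e He. destruct (cauchy_R f I0 ha (e/4) ltac:(lra)) as [M [_ HL]].
  exists M. intros a J Ha Hax HJ.
  rewrite <- (Phi_eq f a x J hloc HJ).
  destruct (Hl (e/2) ltac:(lra)) as [N HN].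
  destruct (nat_big (x + Rabs M)) as [n0 Hn0].
  pose proof (Rle_abs M).
  specialize (HN (N + n0)%nat ltac:(lia)). unfold R_dist, u in HN.
  rewrite plus_INR in HN. pose proof (pos_INR N). pose proof (pos_INR n0).
  assert (Hd : Rabs (Phi f a x - Phi f (x - (INR N + INR n0)) x) < 2 * (e / 4)).
  { apply Phi_diff_small with (-M); auto; lra. }
  revert Hd HN. unfold Rabs at 1 2 3; repeat destruct Rcase_abs; lra.
Qed.

Definition Fl x := epsilon (inhabits 0) (fun I => HK_int_left f x I).

Lemma Fl_spec x : HK_int_left f x (Fl x).
Proof. unfold Fl. apply epsilon_spec. apply left_exists. Qed.

Lemma Fl_approx x e : 0 < e -> exists M, forall a, a < - M -> a <= x -> Rabs (Phi f a x - Fl x) < e.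
Proof.
  intros He. destruct (Fl_spec x) as [_ H]. destruct (H e He) as [M HM].
  exists M. intros a Ha Hax. apply (HM a); auto. apply Phi_spec; auto.
Qed.

Lemma small_below M x : exists a, a < - M /\ a <= x.
Proof. exists (- Rabs M - Rabs x - 1). pose proof (Rle_abs M). pose proof (Rabs_pos x).
  pose proof (Rle_abs (-x)) as Hx. pose proof (Rabs_pos M). rewrite Rabs_Ropp in Hx. split; lra. Qed.

Lemma Fl_diff x y : x <= y -> Fl y - Fl x = Phi f x y.
Proof.
  intros Hxy. apply Rminus_diag_uniq. apply abs_le0. apply le_epsK with 2; [lra|].
  intros e He. destruct (Fl_approx x e He) as [M1 H1]. destruct (Fl_approx y e He) as [M2 H2].
  destruct (small_below (Rmax M1 M2) x) as [a [Ha Hax]].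
  pose proof (Rmax_l M1 M2). pose proof (Rmax_r M1 M2).
  specialize (H1 a ltac:(lra) Hax). specialize (H2 a ltac:(lra) ltac:(lra)).
  rewrite (Phi_add f a x y hloc Hax Hxy) in H2.
  revert H1 H2. unfold Rabs; repeat destruct Rcase_abs; lra.
Qed.

Lemma Fl_cont x e : 0 < e -> exists eta, 0 < eta /\ forall y, Rabs (y - x) < eta -> Rabs (Fl y - Fl x) < e.
Proof.
  intros He.
  destruct (HK_gauge _ _ _ _ (Phi_spec f (x-1) (x+1) hloc ltac:(lra)) (e/4) ltac:(lra)) as [d [Hd Hg]].
  set (eta := Rmin 1 (Rmin (d x) (e / (2 * (Rabs (f x) + 1))))).
  assert (Hfx := Rabs_pos (f x)).
  assert (He2 : 0 < e / (2 * (Rabs (f x) + 1))) by (apply Rdiv_lt_0_compat; lra).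
  assert (Heta : 0 < eta) by (unfold eta; repeat apply Rmin_glb_lt; auto; lra).
  assert (E1 : eta <= 1) by apply Rmin_l.
  assert (E2 : eta <= d x) by (eapply Rle_trans; [apply Rmin_r| apply Rmin_l]).
  assert (E3 : eta <= e / (2 * (Rabs (f x) + 1))) by (eapply Rle_trans; [apply Rmin_r| apply Rmin_r]).
  assert (Hbig : Rabs (f x) * eta <= e / 2).
  { apply Rle_trans with ((Rabs (f x) + 1) * (e / (2 * (Rabs (f x) + 1)))).
    - apply Rmult_le_compat; lra.
    - right. field. lra. }
  exists eta. split; auto. intros y Hy.
  destruct (Rtotal_order x y) as [Hlt|[<-|Hgt]].
  - rewrite Rabs_right in Hy by lra. rewrite Fl_diff by lra.
    assert (HS := SH f (x-1) (x+1) x y d (e/4) hloc ltac:(lra) ltac:(lra) ltac:(lra) ltac:(split; auto)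
                   ((x, y, x) :: nil) ltac:(simpl; repeat split; lra)
                   ltac:(constructor; [|constructor]; lra)).
    simpl in HS.
    assert (Rabs (f x * (y - x)) <= e / 2).
    { rewrite Rabs_mult, (Rabs_right (y - x)) by lra. nra. }
    revert HS H. unfold Rabs; repeat destruct Rcase_abs; lra.
  - unfold Rminus; rewrite Rplus_opp_r, Rabs_R0; lra.
  - rewrite Rabs_left in Hy by lra. rewrite Rabs_minus_sym, Fl_diff by lra.
    assert (HS := SH f (x-1) (x+1) y x d (e/4) hloc ltac:(lra) ltac:(lra) ltac:(lra) ltac:(split; auto)
                   ((y, x, x) :: nil) ltac:(simpl; repeat split; lra)
                   ltac:(constructor; [|constructor]; lra)).
    simpl in HS.
    assert (Rabs (f x * (x - y)) <= e / 2).
    { rewrite Rabs_mult, (Rabs_right (x - y)) by lra. nra. }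
    revert HS H. unfold Rabs; repeat destruct Rcase_abs; lra.
Qed.

End Left.

Lemma HK_deriv H h a b : a <= b -> (forall t, a <= t <= b -> derivable_pt_lim H t (h t)) ->
  HK_int h a b (H b - H a).
Proof.
  intros Hab HD. apply HK_of_gauge; auto. intros eps Heps.
  set (e' := eps / (2 * (b - a + 1))).
  assert (He' : 0 < e') by (apply Rdiv_lt_0_compat; lra).
  assert (Hex : forall t, exists eta, 0 < eta /\ (a <= t <= b -> forall y, Rabs (y - t) < eta ->
              Rabs (H y - H t - h t * (y - t)) <= e' * Rabs (y - t))).
  { intros t. destruct (Rle_dec a t) as [H1|H1]; [destruct (Rle_dec t b) as [H2|H2]|].
    2,3: exists 1; split; [lra| intros; lra].
    destruct (HD t (conj H1 H2) e' He') as [del Hdel]. exists del. split; [apply cond_pos|].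
    intros _ y Hy. destruct (Req_dec y t) as [->|Hne].
    - unfold Rminus; rewrite !Rplus_opp_r, Rmult_0_r, Rplus_opp_r, Rabs_R0, Rmult_0_r. lra.
    - assert (Hk : y - t <> 0) by lra.
      specialize (Hdel (y - t) Hk Hy). replace (t + (y - t)) with y in Hdel by ring.
      replace (H y - H t - h t * (y - t)) with ((y - t) * ((H y - H t) / (y - t) - h t)) by (field; auto).
      rewrite Rabs_mult, Rmult_comm. apply Rmult_le_compat_r; [apply Rabs_pos| lra]. }
  set (del := fun t => proj1_sig (constructive_indefinite_description _ (Hex t))).
  assert (Hdel : forall t, 0 < del t /\ (a <= t <= b -> forall y, Rabs (y - t) < del t ->
              Rabs (H y - H t - h t * (y - t)) <= e' * Rabs (y - t))).
  { intros t. unfold del. destruct (constructive_indefinite_description _ (Hex t)); simpl; auto. }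
  exists del. split; [intros; apply Hdel|].
  assert (Hind : forall P u, a <= u -> tagged_div u b P -> delta_fine del P ->
            Rabs (riemann_sum h P - (H b - H u)) <= e' * (b - u)).
  { induction P as [|[[u v] t] P IH]; intros u0 Hu0 HP HPf.
    - simpl in HP. subst. simpl.
      match goal with |- Rabs (0 - (?x - ?x)) <= _ => replace (0 - (x - x)) with 0 by ring end.
      rewrite Rabs_R0. nra.
    - simpl in HP. destruct HP as (-> & Huv & Ht & HP'). apply fine_cons_iff in HPf.
      destruct HPf as [[F1 F2] HPf']. assert (Hvb := td_le _ _ _ HP').
      specialize (IH v ltac:(lra) HP' HPf').
      destruct (Hdel t) as [_ Hd]. 
      assert (A1 := Hd ltac:(lra) v ltac:(rewrite Rabs_right; lra)).
      assert (A2 := Hd ltac:(lra) u0 ltac:(rewrite Rabs_left1; lra)).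
      rewrite (Rabs_right (v - t)) in A1 by lra. rewrite (Rabs_left1 (u0 - t)) in A2 by lra.
      simpl.
      set (A := H v - H t - h t * (v - t)) in *. set (B := H u0 - H t - h t * (u0 - t)) in *.
      replace (h t * (v - u0) + riemann_sum h P - (H b - H u0)) with
        (- (A + - B) + (riemann_sum h P - (H b - H v))) by (unfold A, B; ring).
      eapply Rle_trans; [apply Rabs_triang|]. rewrite Rabs_Ropp.
      assert (Rabs (A + - B) <= Rabs A + Rabs B) by (eapply Rle_trans; [apply Rabs_triang| rewrite Rabs_Ropp; lra]).
      nra. }
  intros P HP HPf. specialize (Hind P a ltac:(lra) HP HPf).
  assert (e' * (b - a) < eps).
  { apply Rle_lt_trans with (e' * (b - a + 1)).
    - apply Rmult_le_compat_l; lra.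
    - replace (e' * (b - a + 1)) with (eps / 2) by (unfold e'; field; lra). lra. }
  lra.
Qed.

Lemma HK_le_int h k a b I J : HK_int h a b I -> HK_int k a b J ->
  (forall t, a <= t <= b -> h t <= k t) -> I <= J.
Proof.
  intros HI HJ Hhk. pose proof (HK_le _ _ _ _ HI) as Hab.
  apply le_epsK with 2; [lra|]. intros e He.
  destruct (HK_gauge _ _ _ _ HI e He) as [d1 [Hd1 H1]].
  destruct (HK_gauge _ _ _ _ HJ e He) as [d2 [Hd2 H2]].
  destruct (cousin (fun x => Rmin (d1 x) (d2 x)) a b) as [P [HP HPf]]; auto.
  { intros; apply Rmin_glb_lt; auto. }
  specialize (H1 P HP (fine_min1 _ _ _ HPf)). specialize (H2 P HP (fine_min2 _ _ _ HPf)).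
  assert (Hle := rs_le h k a b P Hhk HP).
  revert H1 H2. unfold Rabs; repeat destruct Rcase_abs; lra.
Qed.

Definition cont (h : R -> R) x := forall e, 0 < e -> exists eta, 0 < eta /\
  forall y, Rabs (y - x) < eta -> Rabs (h y - h x) < e.

Lemma cont_of_cpt h x : continuity_pt h x -> cont h x.
Proof.
  intros Hc e He. destruct (Hc e He) as [alp [Halp H]]. exists alp. split; auto.
  intros y Hy. destruct (Req_dec x y) as [->|Hne].
  - unfold Rminus; rewrite Rplus_opp_r, Rabs_R0; auto.
  - apply (H y). split; [split; [exact I| exact Hne]|]. simpl. unfold R_dist. exact Hy.
Qed.

Lemma abspow_nonneg z p : 0 <= abspow z p.
Proof. unfold abspow. destruct Req_EM_T; [lra|]. left; apply Rpower_pos. Qed.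

Lemma abspow_abs z p : abspow (Rabs z) p = abspow z p.
Proof.
  unfold abspow. destruct (Req_EM_T z 0) as [->|Hz].
  - rewrite Rabs_R0. destruct Req_EM_T; lra.
  - destruct Req_EM_T as [H|H]. { exfalso; apply Hz. apply abs_le0. lra. }
    rewrite Rabs_Rabsolu. auto.
Qed.

Lemma cont_abspow_nonneg p y0 : 1 <= p -> 0 <= y0 -> forall e, 0 < e -> exists eta, 0 < eta /\
  forall y, 0 <= y -> Rabs (y - y0) < eta -> Rabs (abspow y p - abspow y0 p) < e.
Proof.
  intros Hp Hy0 e He. destruct (Rle_lt_or_eq_dec _ _ Hy0) as [Hpos| <-].
  - assert (Hd : derivable_pt (fun x => Rpower x p) y0).
    { exists (p * Rpower y0 (p - 1)). apply derivable_pt_lim_power; auto. }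
    destruct (cont_of_cpt _ _ (derivable_continuous_pt _ _ Hd) e He) as [eta [Heta H]].
    exists (Rmin eta y0). split; [apply Rmin_glb_lt; auto|].
    intros y Hy Hyy. assert (Rabs (y - y0) < eta) by (eapply Rlt_le_trans; [exact Hyy| apply Rmin_l]).
    assert (Rabs (y - y0) < y0) by (eapply Rlt_le_trans; [exact Hyy| apply Rmin_r]).
    assert (0 < y) by (revert H1; unfold Rabs; destruct Rcase_abs; lra).
    rewrite !abspow_pos by auto. apply H; auto.
  - exists (Rmin 1 e). split; [apply Rmin_glb_lt; lra|].
    intros y Hy Hyy. unfold Rminus in Hyy. rewrite Ropp_0, Rplus_0_r, Rabs_right in Hyy by lra.
    assert (y < 1) by (eapply Rlt_le_trans; [exact Hyy| apply Rmin_l]).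
    assert (y < e) by (eapply Rlt_le_trans; [exact Hyy| apply Rmin_r]).
    unfold abspow at 2. destruct Req_EM_T; [|lra]. rewrite Rminus_0_r.
    destruct (Req_dec y 0) as [->|Hne].
    { unfold abspow. destruct Req_EM_T; [|lra]. rewrite Rabs_R0; lra. }
    rewrite abspow_pos by lra. rewrite Rabs_right by (left; apply Rpower_pos).
    apply Rle_lt_trans with y; auto.
    unfold Rpower. assert (Hln : ln y < 0).
    { rewrite <- ln_1. apply ln_increasing; lra. }
    rewrite <- (exp_ln y) at 2 by lra.
    destruct (Req_dec p 1) as [->|Hp1]. { rewrite Rmult_1_l; lra. }
    left. apply exp_increasing. nra.
Qed.

Lemma cont_abspow_comp p F x : 1 <= p -> cont F x -> cont (fun z => abspow (F z) p) x.
Proof.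
  intros Hp HF e He.
  destruct (cont_abspow_nonneg p (Rabs (F x)) Hp (Rabs_pos _) e He) as [eta1 [Heta1 H1]].
  destruct (HF eta1 Heta1) as [eta2 [Heta2 H2]]. exists eta2. split; auto.
  intros y Hy. rewrite <- (abspow_abs (F y)), <- (abspow_abs (F x)).
  apply H1; [apply Rabs_pos|]. eapply Rle_lt_trans; [apply Rabs_triang_inv2| auto].
Qed.

Lemma deriv_Kp C q t : 0 < t -> q <> 1 ->
  derivable_pt_lim (fun x => C / (1 - q) * Rpower x (1 - q)) t (C * Rpower t (-q)).
Proof.
  intros Ht Hq.
  assert (H := derivable_pt_lim_scal _ (C / (1 - q)) t _ (derivable_pt_lim_power t (1 - q) Ht)).
  replace (1 - q - 1) with (-q) in H by ring.
  replace (C * Rpower t (-q)) with (C / (1 - q) * ((1 - q) * Rpower t (- q))) by (field; lra).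
  exact H.
Qed.

Lemma deriv_Km C q t : t < 0 -> q <> 1 ->
  derivable_pt_lim (fun x => - (C / (1 - q)) * Rpower (-x) (1 - q)) t (C * Rpower (-t) (-q)).
Proof.
  intros Ht Hq.
  assert (H := derivable_pt_lim_scal _ (- (C / (1 - q))) (-t) _ (derivable_pt_lim_power (-t) (1 - q) ltac:(lra))).
  replace (1 - q - 1) with (-q) in H by ring.
  apply (derivable_pt_lim_mirr_fwd (mult_real_fct (- (C / (1 - q))) (fun x => Rpower x (1 - q)))).
  replace (- (C * Rpower (- t) (- q))) with (- (C / (1 - q)) * ((1 - q) * Rpower (- t) (- q))) by (field; lra).
  exact H.
Qed.

Lemma F_decay f alpha Ig : HK_loc f -> HK_int_R f 0 -> 0 < alpha ->
  HK_int_R (fun t => abspow t alpha * f t) Ig ->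
  exists N, 1 <= N /\ forall x, N <= Rabs x -> Rabs (Fl f x) <= 4 * Rpower (Rabs x) (-alpha).
Proof.
  intros hloc ha Halpha Hg.
  destruct (decay_Phi f alpha Ig hloc Halpha Hg) as [N [HN1 [HR HL]]].
  exists N. split; auto. intros x Hx.
  destruct (Rle_dec 0 x) as [Hx0|Hx0].
  - rewrite Rabs_right in * by lra.
    apply le_epsK with 3; [lra|]. intros e He.
    destruct (Fl_approx f 0 hloc ha x e He) as [M1 H1].
    destruct ha as [_ H0]. destruct (H0 e He) as [M0 HM0].
    set (b := Rabs x + Rabs M0 + 1).
    assert (Hb1 : M0 < b) by (unfold b; pose proof (Rle_abs M0); pose proof (Rabs_pos x); lra).
    assert (Hb2 : x <= b) by (unfold b; pose proof (Rle_abs x); pose proof (Rabs_pos M0); lra).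
    destruct (small_below (Rmax M1 M0) x) as [a [Ha Hax]].
    pose proof (Rmax_l M1 M0) as Hm1. pose proof (Rmax_r M1 M0) as Hm2.
    specialize (H1 a ltac:(lra) Hax).
    assert (H2 := HM0 a b (Phi f a b) ltac:(lra) Hb1 (Phi_spec f a b hloc ltac:(lra))).
    rewrite (Phi_add f a x b hloc Hax Hb2) in H2.
    assert (H3 := HR x b ltac:(lra) Hb2).
    revert H1 H2 H3. unfold Rabs; repeat destruct Rcase_abs; lra.
  - rewrite Rabs_left in * by lra.
    apply le_epsK with 1; [lra|]. intros e He.
    destruct (Fl_approx f 0 hloc ha x e He) as [M1 H1].
    destruct (small_below M1 x) as [a [Ha Hax]].
    specialize (H1 a Ha Hax).
    assert (H3 := HL a x ltac:(lra) Hax).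
    revert H1 H3. unfold Rabs; repeat destruct Rcase_abs; lra.
Qed.

Lemma h_decay F p alpha N : 0 < p -> 
  (forall x, N <= Rabs x -> Rabs (F x) <= 4 * Rpower (Rabs x) (-alpha)) ->
  forall x, N <= Rabs x -> abspow (F x) p <= Rpower 4 p * Rpower (Rabs x) (- (alpha * p)).
Proof.
  intros Hp HF x Hx. specialize (HF x Hx).
  unfold abspow at 1. destruct Req_EM_T as [E|E].
  - left. apply Rmult_lt_0_compat; apply Rpower_pos.
  - assert (0 < Rabs (F x)) by (destruct (Rabs_pos (F x)); auto; exfalso; apply E; apply abs_le0; lra).
    eapply Rle_trans; [apply Rle_Rpower_l; [lra| split; [auto| exact HF]]|].
    rewrite <- Rpower_mult_distr by (try apply Rpower_pos; lra).
    rewrite Rpower_mult. right. f_equal. f_equal. ring.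
Qed.

Lemma final_Lp (F H : R -> R) p alpha N : 1 <= p -> 1 < alpha * p -> 1 <= N ->
  (forall x, N <= Rabs x -> Rabs (F x) <= 4 * Rpower (Rabs x) (-alpha)) ->
  (forall x, derivable_pt_lim H x (abspow (F x) p)) -> in_Lp p F.
Proof.
  intros Hp Hq HN HF HD.
  set (h := fun x => abspow (F x) p).
  set (q := alpha * p) in *. set (C := Rpower 4 p).
  assert (HC : 0 < C) by apply Rpower_pos.
  assert (Hhd := h_decay F p alpha N ltac:(lra) HF). fold q in Hhd.
  assert (HKh : forall a b, a <= b -> HK_int h a b (H b - H a)).
  { intros a b Hab. apply HK_deriv; auto. }
  assert (Hmono : forall a b, a <= b -> H a <= H b).
  { intros a b Hab.
    assert (H0 : HK_int (fun _ => 0) a b 0).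
    { assert (H0 := HK_deriv (fun _ => 0) (fun _ => 0) a b Hab ltac:(intros; apply derivable_pt_lim_const)).
      simpl in H0. replace (0 - 0) with 0 in H0 by ring. exact H0. }
    assert (0 <= H b - H a); [|lra].
    apply (HK_le_int (fun _ => 0) h a b); auto. intros; apply abspow_nonneg. }
  set (A := C / (q - 1) * Rpower N (1 - q)).
  assert (Hq1 : q <> 1) by lra.
  assert (HCq : 0 < C / (q - 1)) by (apply Rdiv_lt_0_compat; lra).
  assert (HA : 0 <= A) by (left; apply Rmult_lt_0_compat; auto; apply Rpower_pos).
  assert (Hright : forall b, N <= b -> H b - H N <= A).
  { intros b Hb.
    assert (HK := HK_deriv (fun x => C / (1 - q) * Rpower x (1 - q)) (fun t => C * Rpower t (-q)) N b Hb
                   ltac:(intros t Ht; apply deriv_Kp; lra)).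
    assert (Hle := HK_le_int h _ N b _ _ (HKh N b Hb) HK).
    eapply Rle_trans; [apply Hle|].
    - intros t Ht. unfold h. assert (Ht' := Hhd t ltac:(rewrite Rabs_right; lra)).
      rewrite Rabs_right in Ht' by lra. exact Ht'.
    - unfold A. assert (0 < Rpower b (1 - q)) by apply Rpower_pos.
      replace (C / (1 - q) * Rpower b (1 - q) - C / (1 - q) * Rpower N (1 - q))
        with (C / (q - 1) * Rpower N (1 - q) - C / (q - 1) * Rpower b (1 - q)) by (field; lra).
      nra. }
  assert (Hleft : forall a, a <= - N -> H (- N) - H a <= A).
  { intros a Ha.
    assert (HK := HK_deriv (fun x => - (C / (1 - q)) * Rpower (-x) (1 - q)) (fun t => C * Rpower (-t) (-q)) a (-N) Ha
                   ltac:(intros t Ht; apply deriv_Km; lra)).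
    assert (Hle := HK_le_int h _ a (-N) _ _ (HKh a (-N) Ha) HK).
    eapply Rle_trans; [apply Hle|].
    - intros t Ht. unfold h. assert (Ht' := Hhd t ltac:(rewrite Rabs_left; lra)).
      rewrite Rabs_left in Ht' by lra. exact Ht'.
    - unfold A. assert (0 < Rpower (-a) (1 - q)) by apply Rpower_pos.
      rewrite Ropp_involutive.
      replace (- (C / (1 - q)) * Rpower N (1 - q) - - (C / (1 - q)) * Rpower (- a) (1 - q))
        with (C / (q - 1) * Rpower N (1 - q) - C / (q - 1) * Rpower (-a) (1 - q)) by (field; lra).
      nra. }
  set (E := fun y => exists b, 0 <= b /\ y = H b - H (- b)).
  assert (HEb : bound E).
  { exists ((H N + A) - (H (-N) - A)). intros y [b [Hb ->]].
    destruct (Rle_dec b N) as [HbN|HbN].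
    - assert (H b <= H N) by (apply Hmono; lra). assert (H (-N) <= H (-b)) by (apply Hmono; lra). lra.
    - assert (H1 := Hright b ltac:(lra)). assert (H2 := Hleft (-b) ltac:(lra)). lra. }
  assert (HEn : exists y, E y) by (exists (H 0 - H (-0)); exists 0; split; [lra| auto]).
  destruct (completeness E HEb HEn) as [I [Hub Hlub]].
  exists I. split.
  { intros a b Hab. exists (H b - H a). apply HKh; auto. }
  intros e He.
  assert (Hex : exists b0, 0 <= b0 /\ I - e < H b0 - H (- b0)).
  { apply Classical_Prop.NNPP; intro Hn.
    assert (I <= I - e); [|lra].
    apply Hlub. intros y [b [Hb ->]]. destruct (Rle_dec (H b - H (-b)) (I - e)) as [|Hc]; auto.
    exfalso; apply Hn; exists b; split; auto; lra. }
  destruct Hex as [b0 [Hb0 Hb0e]]. exists b0. intros a b J Ha Hb HJ.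
  rewrite (HK_unique h a b J (H b - H a) HJ (HKh a b ltac:(lra))).
  set (m := Rmin (- a) b). set (m' := Rmax (- a) b).
  assert (m <= - a) by apply Rmin_l. assert (m <= b) by apply Rmin_r.
  assert (b0 < m) by (apply Rmin_glb_lt; lra).
  assert (- a <= m') by apply Rmax_l. assert (b <= m') by apply Rmax_r.
  assert (H b0 <= H m) by (apply Hmono; lra).
  assert (H (-m) <= H (-b0)) by (apply Hmono; lra).
  assert (H m <= H b) by (apply Hmono; lra).
  assert (H a <= H (-m)) by (apply Hmono; lra).
  assert (H b <= H m') by (apply Hmono; lra).
  assert (H (-m') <= H a) by (apply Hmono; lra).
  assert (H m' - H (- m') <= I) by (apply Hub; exists m'; split; [lra| auto]).
  unfold Rabs; destruct Rcase_abs; lra.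
Qed.

Lemma cpt_of_cont h x : cont h x -> continuity_pt h x.
Proof.
  intros Hc e He. destruct (Hc e He) as [eta [Heta H]]. exists eta. split; auto.
  intros y [_ Hy]. simpl in *. unfold R_dist in *. apply H; auto.
Qed.

From Coquelicot Require Import Coquelicot.

Lemma prim h : (forall x, cont h x) -> exists H, forall x, derivable_pt_lim H x (h x).
Proof.
  intros Hc. assert (Hc' : forall x, continuous h x).
  { intros x. apply continuity_pt_filterlim. apply cpt_of_cont; auto. }
  exists (fun x => RInt h 0 x). intros x. apply is_derive_Reals.
  apply (is_derive_RInt h (fun x => RInt h 0 x) 0 x); auto. apply filter_forall. intros b.
  apply (RInt_correct (V := R_CompleteNormedModule)). apply (ex_RInt_continuous (V := R_CompleteNormedModule)). intros; auto.
Qed.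

Theorem mainTheorem11 (p : R) (f : R -> R)
  (hp : 1 <= p)
  (hloc : HK_loc f)
  (ha : HK_int_R f 0)
  (hb : exists alpha : R, 1 / p < alpha /\
          exists I : R, HK_int_R (fun t => abspow t alpha * f t) I) :
  exists F : R -> R,
    (forall x, HK_int_left f x (F x)) /\ in_Lp p F.
Proof.
  destruct hb as [alpha [Halpha [Ig Hg]]].
  assert (Hp0 : 0 < p) by lra.
  assert (H1p : 0 < 1 / p) by (apply Rdiv_lt_0_compat; lra).
  assert (Hal : 0 < alpha) by lra.
  assert (Hq : 1 < alpha * p).
  { replace 1 with (1 / p * p) by (field; lra). apply Rmult_lt_compat_r; lra. }
  exists (Fl f). split.
  - apply (Fl_spec f 0 hloc ha).
  - destruct (F_decay f alpha Ig hloc ha Hal Hg) as [N [HN HF]].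
    destruct (prim (fun x => abspow (Fl f x) p)) as [H HD].
    { intros x. apply cont_abspow_comp; auto. intros e He. apply (Fl_cont f 0 hloc ha x e He). }
    apply (final_Lp (Fl f) H p alpha N); auto.
Qed.
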